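(* Suppose $\tau_f\in(\tau_c,+\infty)$. Then $$p'(\tau)<\frac{2h(\tau)-2h(\tau_f)}{\tau^2-\tau_f^2}<p'(\tau_f)\quad\text{for }\tau\in(1,\tau_f).$$ Moreover, for any $\tau_b\in(1,\tau_f)$ Liu's extended entropy condition holds: $$\frac{2h(\tau_f)-2h(\tau_b)}{\tau_f^2-\tau_b^2}<\frac{2h(\tau_f)-2h(\tau)}{\tau_f^2-\tau^2}\quad\text{for all }\tau\in(\tau_b,\tau_f).$$
   Context: The pressure is $p(\tau)=\frac{\mathcal S}{(\tau-1)^\gamma}-\frac{1}{\tau^2}$ for $\tau>1$, with constants $1<\gamma<2$, $\mathcal S>0$, assumed such that there exist $1<\tau_1^i<\tau_2^i$ with $p'<0$ on $(1,\infty)$, $p''>0$ on $(1,\tau_1^i)\cup(\tau_2^i,\infty)$, $p''<0$ on $(\tau_1^i,\tau_2^i)$. The function $h$ satisfies $h'(\tau)=\tau p'(\tau)$. $\tau_c$ denotes the unique $\tau_c\in(\tau_1^i,\infty)$ with $p'(\tau_1^i)=\frac{2h(\tau_c)-2h(\tau_1^i)}{\tau_c^2-(\tau_1^i)^2}$. *)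

(* Defs.v *)
From Stdlib Require Import Reals.
From Coquelicot Require Import Coquelicot.
Open Scope R_scope.

Definition pres (S gamma : R) (tau : R) : R :=
  S / Rpower (tau - 1) gamma - 1 / tau ^ 2.

Definition dpres (S gamma : R) : R -> R := Derive (pres S gamma).
Definition ddpres (S gamma : R) : R -> R := Derive (dpres S gamma).

Definition chord (h : R -> R) (a b : R) : R :=
  (2 * h a - 2 * h b) / (a ^ 2 - b ^ 2).

(* Main.v *)
Require Import Defs.
From Stdlib Require Import Reals Lra.
From Coquelicot Require Import Coquelicot.
Open Scope R_scope.


Lemma loc_gt1 (t : R) : 1 < t -> locally t (fun y => 1 < y).
Proof.
  intros Ht. assert (He : 0 < t - 1) by lra.
  exists (mkposreal _ He). intros y Hy. simpl in Hy.
  unfold ball in Hy; simpl in Hy; unfold AbsRing_ball, abs, minus, plus, opp in Hy; simpl in Hy.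
  apply Rabs_lt_between' in Hy. lra.
Qed.

Definition d1 (S gamma : R) (y : R) :=
  - (S * gamma) / ((y - 1) * exp (gamma * ln (y - 1))) + 2 / y ^ 3.

Lemma pres_d1 S gamma y : 1 < y -> is_derive (pres S gamma) y (d1 S gamma y).
Proof.
  intros Hy. unfold pres, Rpower, d1.
  assert (exp (gamma * ln (y - 1)) <> 0) by apply Rgt_not_eq, exp_pos.
  auto_derive.
  - replace (y + - (1)) with (y - 1) by ring. repeat split; try lra; auto.
    apply Rgt_not_eq; nra.
  - replace (y + - (1)) with (y - 1) by ring.
    set (E := exp (gamma * ln (y - 1))) in *.
    change (S * (- (gamma * (1 * / (y - 1)) * E) * / (E * E)) +
      - (1 * (- (1 * ((1 + 1) * (y * 1))) * / (y * (y * 1) * (y * (y * 1))))) =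
      - (S * gamma) / ((y - 1) * E) + 2 / y ^ 3).
    field. repeat split; try lra; auto.
Qed.

Lemma dpres_deriv S gamma t : 1 < t -> is_derive (dpres S gamma) t (ddpres S gamma t).
Proof.
  intros Ht. unfold ddpres. apply Derive_correct.
  apply (ex_derive_ext_loc (d1 S gamma)).
  - generalize (loc_gt1 t Ht). apply filter_imp. intros y Hy.
    unfold dpres. symmetry. apply is_derive_unique. now apply pres_d1.
  - unfold d1. auto_derive. repeat split; try lra. apply Rgt_not_eq.
    + apply Rmult_lt_0_compat; [lra| apply exp_pos].
    + apply Rgt_not_eq. assert (0 < t * t) by nra. nra.
Qed.

Lemma mono_inc (g g' : R -> R) a b : a < b ->
  (forall c, a <= c <= b -> is_derive g c (g' c)) ->
  (forall c, a < c < b -> 0 < g' c) -> g a < g b.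
Proof.
  intros Hab Hd Hp.
  destruct (MVT_cor2 g g' a b Hab) as [c [Hc1 Hc2]].
  - intros c Hc. apply is_derive_Reals. auto.
  - specialize (Hp c Hc2). nra.
Qed.

Lemma G_der (h f : R -> R) k c : is_derive h c (c * f c) ->
  is_derive (fun y => 2 * h y - k * y ^ 2) c (2 * (c * f c) - k * (2 * c)).
Proof.
  intros H. assert (Hd : Derive (fun x => h x) c = c * f c) by (apply is_derive_unique; auto).
  auto_derive.
  - exists (c * f c); auto.
  - rewrite Hd. ring.
Qed.

Lemma Ginc (h f : R -> R) x a b : 0 < a -> a < b ->
  (forall c, a <= c <= b -> is_derive h c (c * f c)) ->
  (forall s, a < s < b -> f x < f s) ->
  2 * h a - f x * a ^ 2 < 2 * h b - f x * b ^ 2.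
Proof.
  intros Ha Hab Hd Hs.
  apply (mono_inc (fun y => 2 * h y - f x * y ^ 2) (fun c => 2 * (c * f c) - f x * (2 * c))); auto.
  - intros c Hc. apply G_der. auto.
  - intros c Hc. specialize (Hs c Hc). nra.
Qed.

Lemma Gdec (h f : R -> R) x a b : 0 < a -> a < b ->
  (forall c, a <= c <= b -> is_derive h c (c * f c)) ->
  (forall s, a < s < b -> f s < f x) ->
  2 * h b - f x * b ^ 2 < 2 * h a - f x * a ^ 2.
Proof.
  intros Ha Hab Hd Hs.
  cut (-(2 * h a - f x * a ^ 2) < -(2 * h b - f x * b ^ 2)). lra.
  apply (mono_inc (fun y => -(2 * h y - f x * y ^ 2)) (fun c => -(2 * (c * f c) - f x * (2 * c)))); auto.
  - intros c Hc. apply (is_derive_opp (fun y => 2 * h y - f x * y ^ 2)). apply G_der. auto.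
  - intros c Hc. specialize (Hs c Hc). nra.
Qed.

Lemma Phi_der (h f : R -> R) F c : c < F -> 0 < c ->
  is_derive h c (c * f c) ->
  is_derive (fun y => (2 * h F - 2 * h y) / (F ^ 2 - y ^ 2)) c
    (2 * c * ((2 * h F - 2 * h c) / (F ^ 2 - c ^ 2) - f c) / (F ^ 2 - c ^ 2)).
Proof.
  intros HcF Hc H. assert (Hd : Derive (fun x => h x) c = c * f c) by (apply is_derive_unique; auto).
  assert (HD : F ^ 2 - c ^ 2 <> 0) by (apply Rgt_not_eq; nra).
  auto_derive.
  - split; [exists (c * f c); auto | split; auto]. simpl in HD. replace (F * (F * 1) + - (c * (c * 1))) with (F * (F * 1) - c * (c * 1)) by ring. auto.
  - rewrite Hd. field. simpl in HD. auto.
Qed.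

Theorem proposition3p2
  (S gamma : R) (h : R -> R) (tau1 tau2 tauc : R)
  (Hgamma : 1 < gamma < 2) (HS : 0 < S)
  (Htau : 1 < tau1 < tau2)
  (Hdp : forall t, 1 < t -> dpres S gamma t < 0)
  (Hddp1 : forall t, 1 < t < tau1 -> 0 < ddpres S gamma t)
  (Hddp2 : forall t, tau2 < t -> 0 < ddpres S gamma t)
  (Hddp3 : forall t, tau1 < t < tau2 -> ddpres S gamma t < 0)
  (Hh : forall t, 1 < t -> is_derive h t (t * dpres S gamma t))
  (Htauc : tau1 < tauc /\ dpres S gamma tau1 = chord h tauc tau1)
  (Htauc_uniq : forall t, tau1 < t -> dpres S gamma tau1 = chord h t tau1 -> t = tauc) :
  forall tauf, tauc < tauf ->
    (forall tau, 1 < tau < tauf ->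
       dpres S gamma tau < chord h tau tauf /\ chord h tau tauf < dpres S gamma tauf) /\
    (forall taub, 1 < taub < tauf ->
       forall tau, taub < tau < tauf -> chord h tauf taub < chord h tauf tau).
Proof.
  set (f := dpres S gamma).
  assert (Hfd : forall t, 1 < t -> is_derive f t (ddpres S gamma t)) by (intros; now apply dpres_deriv).
  assert (inc1 : forall a b, 1 < a -> a < b -> b <= tau1 -> f a < f b).
  { intros a b Ha Hab Hb. apply (mono_inc f (ddpres S gamma)); auto.
    - intros c Hc; apply Hfd; lra.
    - intros c Hc; apply Hddp1; lra. }
  assert (dec : forall a b, tau1 <= a -> a < b -> b <= tau2 -> f b < f a).
  { intros a b Ha Hab Hb.
    cut (- f a < - f b). lra.
    apply (mono_inc (fun y => - f y) (fun y => - ddpres S gamma y)); auto.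
    - intros c Hc; apply (is_derive_opp f); apply Hfd; lra.
    - intros c Hc. assert (ddpres S gamma c < 0) by (apply Hddp3; lra). lra. }
  assert (inc2 : forall a b, tau2 <= a -> a < b -> f a < f b).
  { intros a b Ha Hab. apply (mono_inc f (ddpres S gamma)); auto.
    - intros c Hc; apply Hfd; lra.
    - intros c Hc; apply Hddp2; lra. }
  assert (Hhd : forall a b, 1 < a -> forall c, a <= c <= b -> is_derive h c (c * f c)).
  { intros a b Ha c Hc. apply Hh. lra. }
  destruct Htauc as [Htc Hceq].
  fold f in Hceq.
  assert (Hceq' : 2 * h tauc - f tau1 * tauc ^ 2 = 2 * h tau1 - f tau1 * tau1 ^ 2).
  { unfold chord in Hceq.
    assert (Hd : tauc ^ 2 - tau1 ^ 2 <> 0) by (apply Rgt_not_eq; nra).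
    rewrite Hceq. field. auto. }
  assert (HA : f tau1 < f tauc).
  { destruct (Rlt_or_le (f tau1) (f tauc)) as [H|H]; auto. exfalso.
    assert (2 * h tauc - f tau1 * tauc ^ 2 < 2 * h tau1 - f tau1 * tau1 ^ 2).
    { apply (Gdec h f tau1 tau1 tauc); try lra. intros c Hc; apply Hh; lra.
      intros s Hs. destruct (Rle_or_lt s tau2).
      - apply dec; lra.
      - assert (f s < f tauc) by (apply inc2; lra). lra. }
    lra. }
  assert (Htc2 : tau2 < tauc).
  { destruct (Rle_or_lt tauc tau2); auto. assert (f tauc < f tau1) by (apply dec; lra). lra. }
  intros F HF.
  assert (HfF : f tauc < f F) by (apply inc2; lra).
  assert (HG1 : 2 * h tau1 - f tau1 * tau1 ^ 2 < 2 * h F - f tau1 * F ^ 2).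
  { rewrite <- Hceq'. apply (Ginc h f tau1 tauc F); try lra. intros c Hc; apply Hh; lra.
    intros s Hs. assert (f tauc < f s) by (apply inc2; lra). lra. }
  assert (HltF : forall y, 1 < y < F -> f y < f F).
  { intros y Hy. destruct (Rlt_or_le y tau1).
    - assert (f y < f tau1) by (apply inc1; lra). lra.
    - destruct (Rle_or_lt y tau2).
      + destruct (Req_dec y tau1). subst y. lra.
        assert (f y < f tau1) by (apply dec; lra). lra.
      + apply inc2; lra. }
  assert (P1 : forall x, 1 < x < F -> 2 * h x - f x * x ^ 2 < 2 * h F - f x * F ^ 2).
  { intros x Hx. destruct (Rle_or_lt tau2 x).
    - apply (Ginc h f x x F); try lra. intros c Hc; apply Hh; lra.
      intros s Hs. apply inc2; lra.
    - destruct (Rlt_or_le tau1 x).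
      + assert (2 * h x - f tau1 * x ^ 2 < 2 * h tau1 - f tau1 * tau1 ^ 2).
        { apply (Gdec h f tau1 tau1 x); try lra. intros c Hc; apply Hh; lra.
          intros s Hs. apply dec; lra. }
        assert (f x < f tau1) by (apply dec; lra).
        assert (0 < F ^ 2 - x ^ 2) by nra.
        assert ((f tau1 - f x) * (F ^ 2 - x ^ 2) > 0) by (apply Rmult_lt_0_compat; lra).
        nra.
      + destruct (Req_dec x tau1). subst x. lra.
        assert (2 * h x - f x * x ^ 2 < 2 * h tau1 - f x * tau1 ^ 2).
        { apply (Ginc h f x x tau1); try lra. intros c Hc; apply Hh; lra.
          intros s Hs. apply inc1; lra. }
        assert (f x < f tau1) by (apply inc1; lra).
        assert (0 < F ^ 2 - tau1 ^ 2) by nra.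
        assert ((f tau1 - f x) * (F ^ 2 - tau1 ^ 2) > 0) by (apply Rmult_lt_0_compat; lra).
        nra. }
  assert (P1' : forall x, 1 < x < F -> f x < chord h F x).
  { intros x Hx. specialize (P1 x Hx). unfold chord.
    set (q := (2 * h F - 2 * h x) / (F ^ 2 - x ^ 2)).
    assert (0 < F ^ 2 - x ^ 2) by nra.
    assert (Hq : 2 * h F - 2 * h x = q * (F ^ 2 - x ^ 2)) by (unfold q; field; lra).
    nra. }
  assert (Hsym : forall x, 1 < x < F -> chord h x F = chord h F x).
  { intros x Hx. unfold chord. assert (0 < F ^ 2 - x ^ 2) by nra. field. split; lra. }
  split.
  - intros x Hx. rewrite Hsym by lra. split.
    + apply P1'; auto.
    + assert (2 * h F - f F * F ^ 2 < 2 * h x - f F * x ^ 2).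
      { apply (Gdec h f F x F); try lra. intros c Hc; apply Hh; lra.
        intros s Hs. apply HltF; lra. }
      unfold chord.
      set (q := (2 * h F - 2 * h x) / (F ^ 2 - x ^ 2)).
      assert (0 < F ^ 2 - x ^ 2) by nra.
      assert (Hq : 2 * h F - 2 * h x = q * (F ^ 2 - x ^ 2)) by (unfold q; field; lra).
      nra.
  - intros b Hb x Hx.
    apply (mono_inc (fun y => chord h F y)
      (fun c => 2 * c * ((2 * h F - 2 * h c) / (F ^ 2 - c ^ 2) - f c) / (F ^ 2 - c ^ 2))); try lra.
    + intros c Hc. unfold chord. apply Phi_der; try lra. apply Hh. lra.
    + intros c Hc. specialize (P1' c ltac:(lra)). unfold chord in P1'.
      assert (0 < F ^ 2 - c ^ 2) by nra.
      unfold Rdiv at 1. apply Rmult_lt_0_compat.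
      * apply Rmult_lt_0_compat; lra.
      * apply Rinv_0_lt_compat; lra.
Qed.
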